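(* Let $\mathbb{F}$ be a field with $\mathrm{char}(\mathbb{F})\neq2$, let $X$ be a unitary alternative $\mathbb{F}$-algebra, $B$ an alternative $\mathbb{F}$-algebra and $\varphi\colon B\to X$ an algebra homomorphism (not required to preserve units). Then the vector space $B\oplus X$ with multiplication $$(b,x)\cdot(b',x')=(bb',\;xx'+\varphi(b)x'+x\varphi(b'))$$ is an alternative algebra, and together with the inclusion $x\mapsto(0,x)$, the projection $(b,x)\mapsto b$ and the section $b\mapsto(b,0)$ it forms a split extension of $B$ by $X$ in $\mathbf{Alt}$.
   Context: An alternative algebra is a non-associative algebra satisfying $(yx)x=y(xx)$ and $x(xy)=(xx)y$; $\mathbf{Alt}$ is the category of such algebras with multiplicative linear maps. A split extension of $B$ by $X$ is a diagram $X\xrightarrow{k}A\underset{\beta}{\overset{\alpha}{\rightleftarrows}}B$ with $\alpha\circ\beta=\mathrm{id}_B$ and $(X,k)$ a kernel of $\alpha$. *)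

(* Defs.v *)
(* Non-associative algebras over a field F are modelled as
   an lmodType F together with a bilinear multiplication. *)
From HB Require Import structures.
From mathcomp Require Import all_boot all_order all_algebra.
Set Implicit Arguments. Unset Strict Implicit. Unset Printing Implicit Defensive.
Import GRing.Theory.
Local Open Scope ring_scope.

Section NonAssoc.
Variable F : fieldType.

Definition bilinear_mul (V : lmodType F) (m : V -> V -> V) : Prop :=
  (forall (a : F) (x y z : V), m (a *: x + y) z = a *: m x z + m y z) /\
  (forall (a : F) (x y z : V), m x (a *: y + z) = a *: m x y + m x z).

Definition alternative_law (V : lmodType F) (m : V -> V -> V) : Prop :=
  (forall x y : V, m (m y x) x = m y (m x x)) /\
  (forall x y : V, m x (m x y) = m (m x x) y).

Definition alt_algebra (V : lmodType F) (m : V -> V -> V) : Prop :=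
  bilinear_mul m /\ alternative_law m.

Definition unitary (V : lmodType F) (m : V -> V -> V) : Prop :=
  exists e : V, forall x : V, m e x = x /\ m x e = x.

Definition alg_hom (U V : lmodType F) (mU : U -> U -> U) (mV : V -> V -> V)
  (f : U -> V) : Prop :=
  (forall (a : F) (x y : U), f (a *: x + y) = a *: f x + f y) /\
  (forall x y : U, f (mU x y) = mV (f x) (f y)).

(* (X, k) is a kernel of alpha : A -> B in Alt (the zero morphism is the
   constant-0 map, as the zero algebra is a zero object of Alt) *)
Definition is_kernel (X A B : lmodType F) (mX : X -> X -> X) (mA : A -> A -> A)
  (k : X -> A) (alpha : A -> B) : Prop :=
  (forall x : X, alpha (k x) = 0) /\
  (forall (C : lmodType F) (mC : C -> C -> C), alt_algebra mC ->
     forall f : C -> A, alg_hom mC mA f -> (forall c : C, alpha (f c) = 0) ->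
     exists g : C -> X,
       (alg_hom mC mX g /\ (forall c : C, k (g c) = f c)) /\
       (forall g' : C -> X, alg_hom mC mX g' -> (forall c : C, k (g' c) = f c) ->
          forall c : C, g' c = g c)).

Definition split_extension (X A B : lmodType F) (mX : X -> X -> X)
  (mA : A -> A -> A) (mB : B -> B -> B)
  (k : X -> A) (alpha : A -> B) (beta : B -> A) : Prop :=
  (alt_algebra mX /\ alt_algebra mA /\ alt_algebra mB) /\
  (alg_hom mX mA k /\ alg_hom mA mB alpha /\ alg_hom mB mA beta) /\
  (forall b : B, alpha (beta b) = b) /\
  is_kernel mX mA k alpha.

Definition sd_mul (B X : lmodType F) (mB : B -> B -> B) (mX : X -> X -> X)
  (phi : B -> X) (p q : (B * X)%type) : (B * X)%type :=
  (mB p.1 q.1, mX p.2 q.2 + mX (phi p.1) q.2 + mX p.2 (phi q.1)).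

Definition sd_incl (B X : lmodType F) (x : X) : (B * X)%type := (0, x).
Definition sd_proj (B X : lmodType F) (p : (B * X)%type) : B := p.1.
Definition sd_sect (B X : lmodType F) (b : B) : (B * X)%type := (b, 0).

End NonAssoc.

(* Main.v *)
Require Import Defs.
From HB Require Import structures.
From mathcomp Require Import all_boot all_order all_algebra.
Import GRing.Theory.
Local Open Scope ring_scope.

Section H.
Variable F : fieldType.
Variable V : lmodType F.
Variable m : V -> V -> V.
Hypothesis bm : bilinear_mul m.

Lemma mDl x y z : m (x + y) z = m x z + m y z.
Proof. by have := (bm.1 1 x y z); rewrite !scale1r. Qed.
Lemma mDr x y z : m x (y + z) = m x y + m x z.
Proof. by have := (bm.2 1 x y z); rewrite !scale1r. Qed.
Lemma m0l z : m 0 z = 0.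
Proof. by apply: (addrI (m 0 z)); rewrite addr0 -mDl addr0. Qed.
Lemma m0r z : m z 0 = 0.
Proof. by apply: (addrI (m z 0)); rewrite addr0 -mDr addr0. Qed.
Lemma mZl a x z : m (a *: x) z = a *: m x z.
Proof. by have := (bm.1 a x 0 z); rewrite !addr0 m0l addr0. Qed.
Lemma mZr a x z : m x (a *: z) = a *: m x z.
Proof. by have := (bm.2 a x z 0); rewrite !addr0 m0r addr0. Qed.
End H.

Section H2.
Variable F : fieldType.
Variables U V : lmodType F.
Variable f : U -> V.
Hypothesis lf : forall (a : F) (x y : U), f (a *: x + y) = a *: f x + f y.
Lemma fD x y : f (x + y) = f x + f y.
Proof. by have := lf 1 x y; rewrite !scale1r. Qed.
Lemma f0 : f 0 = 0.
Proof. by apply: (addrI (f 0)); rewrite addr0 -fD addr0. Qed.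
Lemma fZ a x : f (a *: x) = a *: f x.
Proof. by have := lf a x 0; rewrite addr0 f0 addr0. Qed.
End H2.

Theorem mainTheorem5 (F : fieldType) (B X : lmodType F)
  (mB : B -> B -> B) (mX : X -> X -> X) (phi : B -> X) :
  (2%:R : F) != 0 ->
  alt_algebra mX -> unitary mX ->
  alt_algebra mB ->
  alg_hom mB mX phi ->
  alt_algebra (sd_mul mB mX phi) /\
  split_extension mX (sd_mul mB mX phi) mB
    (@sd_incl F B X) (@sd_proj F B X) (@sd_sect F B X).
Proof.
move=> _ [bX [aX1 aX2]] _ [bB [aB1 aB2]] [lp mp].
have key : forall p q, (sd_mul mB mX phi p q).2 =
   mX (p.2 + phi p.1) (q.2 + phi q.1) - mX (phi p.1) (phi q.1).
  move=> [b x] [b' x'] /=.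
  rewrite !(@mDl _ _ _ bX) !(@mDr _ _ _ bX) -!addrA subrr addr0; congr (_ + _).
  by rewrite addrC.
have key2 : forall p q, (sd_mul mB mX phi p q).2 + phi (sd_mul mB mX phi p q).1
   = mX (p.2 + phi p.1) (q.2 + phi q.1).
  by move=> p q; rewrite key /= mp addrNK.
have sc2 : forall a (p : B * X), (a *: p).2 = a *: p.2 by [].
have ad2 : forall (p q : B * X), (p + q).2 = p.2 + q.2 by [].
have bsd : bilinear_mul (sd_mul mB mX phi).
  split=> a [b x] [b' x'] [b'' x''] /=; rewrite /sd_mul /=.
    congr pair; first by rewrite bB.1.
    rewrite ?sc2 ?ad2 /=.
    rewrite lp !(@mDl _ _ _ bX) !(@mZl _ _ _ bX) !scalerDr -!addrA; congr (_ + _).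
    rewrite addrCA; congr (_ + _).
    rewrite [RHS]addrCA; congr (_ + _).
    by rewrite addrCA.
  congr pair; first by rewrite bB.2.
  rewrite ?sc2 ?ad2 /=.
  rewrite lp !(@mDr _ _ _ bX) !(@mZr _ _ _ bX) !scalerDr -!addrA; congr (_ + _).
  rewrite addrCA; congr (_ + _).
  rewrite [RHS]addrCA; congr (_ + _).
  by rewrite addrCA.
have asd : alt_algebra (sd_mul mB mX phi).
  split=> //; split=> p q.
    apply: injective_projections; first by rewrite /sd_mul /= aB1.
    by rewrite key [in RHS]key !key2 aX1 /= !mp aX1.
  apply: injective_projections; first by rewrite /sd_mul /= aB2.
  by rewrite key [in RHS]key !key2 aX2 /= !mp aX2.
have hp0 : phi 0 = 0 := @f0 _ _ _ _ lp.
split=> //; split; first by split=> //; split.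
split; [split; [|split]|split].
- split=> [a x y|x y]; rewrite /sd_incl.
    by apply: injective_projections; rewrite /= ?scaler0 ?addr0.
  by rewrite /sd_mul /= hp0 !(@m0l _ _ _ bX) !(@m0r _ _ _ bX) !addr0 (@m0l _ _ _ bB).
- by split.
- split=> [a x y|x y]; rewrite /sd_sect.
    by apply: injective_projections; rewrite /= ?scaler0 ?addr0.
  by rewrite /sd_mul /= !(@m0l _ _ _ bX) !(@m0r _ _ _ bX) !addr0.
- by [].
split; first by [].
move=> C mC _ f [lf mf] hf0; have hf : forall c, (f c).1 = 0 := hf0.
exists (fun c => (f c).2); split.
  split; first split.
  - by move=> a x y; rewrite lf.
  - move=> x y; rewrite mf /sd_mul /= !hf hp0 (@m0l _ _ _ bX) (@m0r _ _ _ bX) !addr0.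
    by [].
  - by move=> c; rewrite /sd_incl -(hf c); case: (f c).
move=> g' _ hg c; by rewrite -hg.
Qed.
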